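(* Let $G$ be a finite group of order $n$, let $f:G\to\mathbb{Q}$ be a class function with $f(g)=f(g^{-1})$ for all $g\in G$, and let $\Gamma_f=\operatorname{Cay}(G,f)$. Let $H_f=\{h\in\mathbb{Z}_n^*\mid f^h=f\}$. Then $\mathbb{SF}(\Gamma_f)\subseteq \mathbb{Q}(\zeta_n)$ and $H_f=\eta(\operatorname{Gal}(\mathbb{Q}(\zeta_n)/\mathbb{SF}(\Gamma_f)))$.
   Context: $\zeta_n=e^{2\pi i/n}$; $\mathbb{Z}_n^*$ is the unit group of $\mathbb{Z}/n\mathbb{Z}$; $\eta:\operatorname{Gal}(\mathbb{Q}(\zeta_n)/\mathbb{Q})\to\mathbb{Z}_n^*$ is the isomorphism with $\sigma(\zeta_n)=\zeta_n^{\eta(\sigma)}$. For $h\in\mathbb{Z}_n^*$, $f^h(g)=f(g^h)$. The Cayley colour graph $\Gamma_f=\operatorname{Cay}(G,f)$ has vertex set $G$ and adjacency matrix $[f(gh^{-1})]_{g,h\in G}$; its eigenvalues are those of this matrix. The splitting field $\mathbb{SF}(\Gamma_f)$ is the smallest subfield of $\mathbb{C}$ containing $\mathbb{Q}$ and all eigenvalues of $\Gamma_f$. *)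

(* Defs.v *)
From HB Require Import structures.
From mathcomp Require Import all_boot all_order all_algebra all_fingroup all_field.
Set Implicit Arguments. Unset Strict Implicit. Unset Printing Implicit Defensive.
Import GRing.Theory Num.Theory.
Local Open Scope ring_scope.

(* The finite group G is the whole carrier of gT : finGroupType; vertices are
   indexed by 'I_#|gT| through enum_val. *)

(* Adjacency matrix [f(g h^-1)]_{g,h in G} of Cay(G,f), over algC (= the
   algebraic complex numbers, containing all eigenvalues). *)
Definition cay_adj (gT : finGroupType) (f : gT -> rat) : 'M[algC]_#|gT| :=
  \matrix_(i, j) ratr (f ((enum_val i) * (enum_val j)^-1)%g).

Definition cay_eig (gT : finGroupType) (f : gT -> rat) (x : algC) : Prop :=
  eigenvalue (cay_adj f) x.

(* Smallest subfield of algC containing the set E (every subfield contains Q). *)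
Definition in_gen_subfield (E : algC -> Prop) (x : algC) : Prop :=
  forall S : {pred algC}, divring_closed S -> (forall y, E y -> y \in S) -> x \in S.

Definition in_SF (gT : finGroupType) (f : gT -> rat) (x : algC) : Prop :=
  in_gen_subfield (cay_eig f) x.

Definition in_Qz (z : algC) (x : algC) : Prop := in_gen_subfield (fun y => y = z) x.

(* sigma (a function on algC, only its restriction matters) restricts to a
   field automorphism of the subfield K. *)
Definition is_field_aut (K : algC -> Prop) (sigma : algC -> algC) : Prop :=
  (forall x, K x -> K (sigma x)) /\
  [/\
      forall x y, K x -> K y -> sigma (x + y) = sigma x + sigma y,
      forall x y, K x -> K y -> sigma (x * y) = sigma x * sigma y,
      sigma 1 = 1,
      forall x y, K x -> K y -> sigma x = sigma y -> x = y &
      forall y, K y -> exists2 x, K x & sigma x = y].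

Definition in_Gal_Qz_SF (gT : finGroupType) (f : gT -> rat) (z : algC)
    (sigma : algC -> algC) : Prop :=
  is_field_aut (in_Qz z) sigma /\ (forall x, in_SF f x -> sigma x = x).

(* Main.v *)
Require Import Defs.
From HB Require Import structures.
From mathcomp Require Import all_boot all_order all_algebra all_fingroup all_field.
From mathcomp Require Import all_solvable all_character.
From Stdlib Require Import ClassicalEpsilon.
From mathcomp Require Import ring.
Import GRing.Theory Num.Theory.
Local Open Scope ring_scope.

Definition asb (P : Prop) : bool := if excluded_middle_informative P then true else false.
Lemma asbP (P : Prop) : reflect P (asb P).
Proof. by rewrite /asb; case: excluded_middle_informative => H; constructor. Qed.

Section Closed.
Lemma dc0 {S : {pred algC}} : divring_closed S -> 0 \in S.
Proof. by case=> S1 Ssub _; rewrite -(subrr 1); apply: Ssub. Qed.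
Lemma dcN {S : {pred algC}} {x} : divring_closed S -> x \in S -> - x \in S.
Proof. move=> HS Sx; have S0 := dc0 HS; case: HS => _ Ssub _; rewrite -sub0r; exact: Ssub. Qed.
Lemma dcD {S : {pred algC}} {x y} : divring_closed S -> x \in S -> y \in S -> x + y \in S.
Proof. move=> HS Sx Sy; have := dcN HS Sy; case: HS => _ Ssub _ Sny.
by rewrite -(opprK y); apply: Ssub. Qed.
Lemma dcB {S : {pred algC}} {x y} : divring_closed S -> x \in S -> y \in S -> x - y \in S.
Proof. by case=> _ Ssub _; apply: Ssub. Qed.
Lemma dcV {S : {pred algC}} {x} : divring_closed S -> x \in S -> x^-1 \in S.
Proof. by case=> S1 _ Sdiv Sx; rewrite -div1r; apply: Sdiv. Qed.
Lemma dcM {S : {pred algC}} {x y} : divring_closed S -> x \in S -> y \in S -> x * y \in S.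
Proof. move=> HS Sx Sy; have := dcV HS Sy; case: HS => _ _ Sdiv Siy.
by rewrite -(invrK y); apply: Sdiv. Qed.
Lemma dcDiv {S : {pred algC}} {x y} : divring_closed S -> x \in S -> y \in S -> x / y \in S.
Proof. by case=> _ _ Sdiv; apply: Sdiv. Qed.
Lemma dc1 {S : {pred algC}} : divring_closed S -> 1 \in S.
Proof. by case. Qed.
Lemma dcX {S : {pred algC}} {x} k : divring_closed S -> x \in S -> x ^+ k \in S.
Proof. move=> HS Sx; elim: k => [|k IH]; first exact: dc1. by rewrite exprS dcM. Qed.
Lemma dcn {S : {pred algC}} k : divring_closed S -> k%:R \in S.
Proof. move=> HS; elim: k => [|k IH]; first exact: dc0. by rewrite mulrS dcD // dc1. Qed.
Lemma dcz {S : {pred algC}} (k : int) : divring_closed S -> k%:~R \in S.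
Proof. by move=> HS; case: k => k; rewrite ?NegzE ?mulrNz ?dcN // dcn. Qed.
Lemma dcrat {S : {pred algC}} q : divring_closed S -> ratr q \in S.
Proof. by move=> HS; rewrite /ratr dcDiv // dcz. Qed.
Lemma dcsum {S : {pred algC}} (I : Type) (r : seq I) (P : pred I) F :
  divring_closed S -> (forall i, P i -> F i \in S) -> \sum_(i <- r | P i) F i \in S.
Proof. by move=> HS HF; elim/big_ind: _ => //; [exact: dc0 | move=> ? ?; apply: dcD]. Qed.
End Closed.
Arguments dcsum {S I r P F}.

Section Rep.
Variable gT : finGroupType.

Lemma sum_enum (F : gT -> algC) : \sum_(k < #|gT|) F (enum_val k) = \sum_x F x.
Proof. by rewrite -(big_enum_val F). Qed.

Lemma sum_delta (a : gT) (F : gT -> algC) : \sum_x ((x == a)%:R * F x) = F a.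
Proof.
rewrite (bigD1 a) //= eqxx mul1r big1 ?addr0 // => x /negbTE ->.
by rewrite mul0r.
Qed.

Definition Qrep (u : gT) : 'M[algC]_#|gT| :=
  \matrix_(i, j) ((enum_val j == u^-1 * enum_val i)%g)%:R.

Lemma Qrep_repr : mx_repr [set: gT] Qrep.
Proof.
split.
  apply/matrixP=> i j; rewrite !mxE invg1 mul1g.
  by rewrite (inj_eq enum_val_inj) eq_sym.
move=> u w _ _; apply/matrixP=> i j; rewrite !mxE.
under eq_bigr do rewrite !mxE.
rewrite (sum_enum (fun x => ((x == u^-1 * enum_val i)%g)%:R *
   ((enum_val j == w^-1 * x)%g)%:R)).
by rewrite sum_delta invMg mulgA.
Qed.

Definition QR := MxRepresentation Qrep_repr.

Lemma eqQ (a b u : gT) : (b == u^-1 * a)%g = (u == a * b^-1)%g.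
Proof.
apply/eqP/eqP => ->; first by rewrite invMg invgK mulKVg.
by rewrite invMg invgK mulgKV.
Qed.

Lemma eqQ2 (b u x : gT) : (b == u^-1 * x)%g = (x == u * b)%g.
Proof.
by apply/eqP/eqP => ->; rewrite ?mulKVg ?mulKg.
Qed.

Lemma cay_sum (f : gT -> rat) :
  cay_adj f = \sum_u ratr (f u) *: Qrep u.
Proof.
apply/matrixP=> i j; rewrite !mxE summxE.
under eq_bigr do rewrite !mxE eqQ mulrC.
by rewrite sum_delta.
Qed.

Lemma cay_comm (f : gT -> rat) (u : gT) :
  (forall g x : gT, f (g ^ x)%g = f g) ->
  cay_adj f *m Qrep u = Qrep u *m cay_adj f.
Proof.
move=> fJ; apply/matrixP=> i j; rewrite !mxE.
under eq_bigr do rewrite !mxE.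
under [RHS]eq_bigr do rewrite !mxE.
rewrite (sum_enum (fun x => ratr (f (enum_val i * x^-1)%g) *
   ((enum_val j == u^-1 * x)%g)%:R)).
rewrite (sum_enum (fun x => ((x == u^-1 * enum_val i)%g)%:R *
   ratr (f (x * (enum_val j)^-1)%g))).
rewrite sum_delta.
under eq_bigr do rewrite eqQ2 mulrC.
rewrite sum_delta; congr ratr.
rewrite -[in RHS](fJ _ (u^-1)%g) conjgE invgK.
by rewrite invMg !mulgA mulgV mul1g.
Qed.

Lemma eig_trace (f : gT -> rat) (l : algC) :
  (forall g x : gT, f (g ^ x)%g = f g) ->
  eigenvalue (cay_adj f) l ->
  exists d (rW : mx_representation algC [set: gT] d),
    (0 < d)%N /\ l * d%:R = \sum_u ratr (f u) * \tr (rW u).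
Proof.
move=> fJ; rewrite /eigenvalue => nzW.
set W := eigenspace (cay_adj f) l in nzW *.
have eW : W *m cay_adj f = l *: W by apply/eigenspaceP.
have modW : mxmodule QR W.
  apply/mxmoduleP => u _; apply/eigenspaceP.
  by rewrite -mulmxA /= -cay_comm // mulmxA eW -scalemxAl.
exists (\rank W), (submod_repr modW); split; first by rewrite lt0n mxrank_eq0.
have key : \sum_u ratr (f u) *: submod_repr modW u = l%:M.
  transitivity (in_submod W (val_submod (U:=W) 1%:M *m cay_adj f)).
    rewrite cay_sum mulmx_sumr in_submodE mulmx_suml; apply: eq_bigr => u _.
    by rewrite /= /submod_mx in_submodE -scalemxAr -scalemxAl.
  have /eigenspaceP -> := val_submodP (U:=W) (1%:M : 'M_(\rank W)).
  by rewrite in_submodE -scalemxAl -in_submodE val_submodK scalemx1.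
rewrite mulr_natr -mxtrace_scalar -key raddf_sum /=.
by apply: eq_bigr => u _; rewrite mxtraceZ.
Qed.

End Rep.

Lemma diag_exp d (e : 'rV[algC]_d) k :
  (diag_mx e) ^+ k = diag_mx (\row_i (e 0 i ^+ k)).
Proof.
elim: k => [|k IH].
  by rewrite expr0; apply/matrixP=> i j; rewrite !mxE expr0.
rewrite exprS IH -mulmxE mulmx_diag; congr diag_mx; apply/rowP=> i.
by rewrite !mxE exprS.
Qed.

Lemma conj_exp d (B M : 'M[algC]_d) k : B \in unitmx ->
  (invmx B *m M *m B) ^+ k = invmx B *m M ^+ k *m B.
Proof.
move=> uB; elim: k => [|k IH]; first by rewrite !expr0 mulmx1 mulVmx.
by rewrite exprS IH -!mulmxE !mulmxA mulmxK // exprS -mulmxE !mulmxA.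
Qed.

Lemma tr_conj d (B M : 'M[algC]_d) : B \in unitmx -> \tr (invmx B *m M *m B) = \tr M.
Proof. by move=> uB; rewrite mxtrace_mulC mulKVmx. Qed.

Lemma repr_tr_diag (gT : finGroupType) d (rW : mx_representation algC [set: gT] d) (x : gT) :
  exists e : 'rV[algC]_d, (forall i, e 0 i ^+ #|gT| = 1) /\
    forall k, \tr (rW (x ^+ k)%g) = \sum_i e 0 i ^+ k.
Proof.
case: d rW => [|d] rW.
  exists 0; split=> [[]//|k]; by rewrite /mxtrace !big_ord0.
have Gx : x \in [set: gT] by rewrite inE.
have [e [[B uB rWx] [eo _] _ _]] := repr_rsim_diag rW Gx.
exists e; split.
  move=> i; have := order_dvdG Gx; rewrite cardsT => /dvdnP[q ->].
  by rewrite mulnC exprM eo expr1n.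
move=> k; rewrite (repr_mxX rW) // rWx conj_exp // tr_conj // diag_exp mxtrace_diag.
by apply: eq_bigr => i _; rewrite mxE.
Qed.

Arguments eig_trace {gT f l}.
Arguments sum_enum {gT}.
Arguments sum_delta {gT}.
Arguments repr_tr_diag {gT d}.

Lemma inj_exp (gT : finGroupType) h : coprime h #|gT| -> injective (fun u : gT => (u ^+ h)%g).
Proof.
move=> co; have co' : coprime #|[set: gT]| h by rewrite cardsT coprime_sym.
apply: (can_inj (g := fun u : gT => (u ^+ expg_invn [set: gT] h)%g)) => u.
exact: (expgK co' (in_setT u)).
Qed.

Lemma eig_in_S (gT : finGroupType) (f : gT -> rat) (z : algC) (S : {pred algC}) l :
  (forall g x : gT, f (g ^ x)%g = f g) -> #|gT|.-primitive_root z ->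
  divring_closed S -> z \in S -> eigenvalue (cay_adj f) l -> l \in S.
Proof.
move=> fJ pz HS Sz /(eig_trace fJ) [d [rW [d0 E]]].
have dn0 : d%:R != 0 :> algC by rewrite pnatr_eq0 -lt0n.
have -> : l = (\sum_u ratr (f u) * \tr (rW u)) / d%:R by rewrite -E mulfK.
apply: (dcDiv HS _ (dcn d HS)); apply: (dcsum HS) => u _.
apply: (dcM HS (dcrat (f u) HS)).
have [e [e1 tr]] := repr_tr_diag rW u.
rewrite -(expg1 u) tr; apply: (dcsum HS) => i _; rewrite expr1.
have [k ->] := prim_rootP pz (e1 i); exact: dcX HS Sz.
Qed.

Lemma tr_nu (gT : finGroupType) d (rW : mx_representation algC [set: gT] d) h
  (nu : {rmorphism algC -> algC}) :
  (forall w, w ^+ #|gT| = 1 -> nu w = w ^+ h) ->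
  forall u, nu (\tr (rW u)) = \tr (rW (u ^+ h)%g).
Proof.
move=> Hnu u; have [e [e1 tr]] := repr_tr_diag rW u.
rewrite -{1}(expg1 u) !tr rmorph_sum; apply: eq_bigr => i _.
by rewrite expr1 Hnu.
Qed.
Arguments tr_nu {gT d} rW {h nu}.

Lemma eig_fixed (gT : finGroupType) (f : gT -> rat) h (nu : {rmorphism algC -> algC}) l :
  (forall g x : gT, f (g ^ x)%g = f g) -> coprime h #|gT| ->
  (forall w, w ^+ #|gT| = 1 -> nu w = w ^+ h) ->
  (forall u : gT, f (u ^+ h)%g = f u) ->
  eigenvalue (cay_adj f) l -> nu l = l.
Proof.
move=> fJ co Hnu fh /(eig_trace fJ) [d [rW [d0 E]]].
have dn0 : d%:R != 0 :> algC by rewrite pnatr_eq0 -lt0n.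
apply: (mulIf dn0); rewrite E.
have := congr1 nu E; rewrite rmorphM rmorph_nat => ->.
rewrite rmorph_sum.
transitivity (\sum_u ratr (f (u ^+ h)%g) * \tr (rW (u ^+ h)%g)).
  by apply: eq_bigr => u _; rewrite rmorphM fmorph_rat (tr_nu rW Hnu) fh.
by rewrite [RHS](reindex_inj (inj_exp _ _ co)).
Qed.

Lemma char_aut (gT : finGroupType) h (nu : {rmorphism algC -> algC})
    (i : Iirr [set: gT]) (y : gT) :
  (forall w, w ^+ #|gT| = 1 -> nu w = w ^+ h) ->
  nu ('chi_i y) = 'chi_i (y ^+ h)%g.
Proof.
move=> Hnu; have /char_reprP [rG ->] := irr_char i.
by rewrite !cfunE !in_setT !mulr1n (tr_nu rG Hnu).
Qed.
Arguments char_aut {gT h nu i y}.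

Lemma mkCF_proof (gT : finGroupType) (d : gT -> algC) :
  (forall x y, d (x ^ y)%g = d x) -> is_class_fun <<[set: gT]>>%g (finfun d).
Proof.
move=> Hd; rewrite genGid; apply: intro_class_fun => [x y _ _ | x]; first exact: Hd.
by rewrite in_setT.
Qed.

Definition mkCF (gT : finGroupType) (d : gT -> algC) Hd : 'CF([set: gT]) :=
  Cfun 0 (@mkCF_proof gT d Hd).

Lemma mkCFE (gT : finGroupType) (d : gT -> algC) Hd x : @mkCF gT d Hd x = d x.
Proof. exact: cfunE. Qed.

Lemma exp_mod1 (gT : finGroupType) (y : gT) k : k = 1 %[mod #|gT|] -> (y ^+ k)%g = y.
Proof.
move=> Hk; have dv : (#[y]%g %| #|gT|)%N by rewrite -cardsT order_dvdG ?in_setT.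
by rewrite -expg_mod_order -(modn_dvdm k dv) Hk (modn_dvdm 1 dv) expg_mod_order expg1.
Qed.

Lemma ratr_inj' : injective (@ratr algC).
Proof. exact: fmorph_inj. Qed.

Lemma cdE (gT : finGroupType) (phi : 'CF([set: gT])) (i : Iirr [set: gT]) :
  '[phi, 'chi_i] * #|[set: gT]|%:R = \sum_x phi x * 'chi_i (x^-1)%g.
Proof.
rewrite cfdotE mulrC mulVKf ?neq0CG //.
rewrite (eq_bigl xpredT) => [|x]; last by rewrite in_setT.
by apply: eq_bigr => x _; rewrite irr_inv.
Qed.

Lemma eig_chi (gT : finGroupType) (f : gT -> rat) (i : Iirr [set: gT])
    (F : 'CF([set: gT])) :
  (forall x, F x = ratr (f x)) ->
  eigenvalue (cay_adj f) ('[F, 'chi_i] * #|[set: gT]|%:R / 'chi_i 1%g).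
Proof.
move=> FE; apply/eigenvalueP.
exists (\row_k 'chi_i ((enum_val k)^-1)%g); last first.
  apply/eqP => /rowP /(_ (enum_rank 1%g)); rewrite !mxE enum_rankK invg1.
  by apply/eqP; apply: irr1_neq0.
apply/rowP => k; rewrite !mxE.
under eq_bigr do rewrite !mxE -FE.
rewrite (sum_enum (fun x => 'chi_i (x^-1)%g * F (x * (enum_val k)^-1)%g)).
set y := ((enum_val k)^-1)%g.
have GO a : \sum_x 'chi_a (x * y)%g * 'chi_i (x^-1)%g =
    (a == i)%:R * ('chi_a y / 'chi_a 1%g) * #|[set: gT]|%:R.
  rewrite -(generalized_orthogonality_relation y a i) mulrC mulVKf ?neq0CG //.
  by apply: eq_bigl => x; rewrite in_setT.
rewrite (eq_bigr (fun x => \sum_a 'chi_i (x^-1)%g * ('[F, 'chi_a] * 'chi_a (x * y)%g))); last first.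
  move=> x _; rewrite {1}(cfun_sum_cfdot F) sum_cfunE mulr_sumr.
  by apply: eq_bigr => a _; rewrite cfunE.
rewrite exchange_big /=.
have inner a : \sum_x 'chi_i (x^-1)%g * ('[F, 'chi_a] * 'chi_a (x * y)%g) =
   '[F, 'chi_a] * ((a == i)%:R * ('chi_a y / 'chi_a 1%g) * #|[set: gT]|%:R).
  rewrite -GO mulr_sumr; apply: eq_bigr => x _.
  by rewrite mulrCA; congr (_ * _); rewrite mulrC.
rewrite (eq_bigr _ (fun a _ => inner a)) (bigD1 i) //= big1 ?addr0 => [|a nai]; last first.
  by rewrite (negbTE nai) !mul0r mulr0.
rewrite eqxx mul1r.
by ring.
Qed.

Lemma conv (gT : finGroupType) (f : gT -> rat) h (nu : {rmorphism algC -> algC}) :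
  (forall g x : gT, f (g ^ x)%g = f g) -> coprime h #|gT| ->
  (forall w, w ^+ #|gT| = 1 -> nu w = w ^+ h) ->
  (forall l, eigenvalue (cay_adj f) l -> nu l = l) ->
  forall u : gT, f (u ^+ h)%g = f u.
Proof.
move=> fJ co Hnu Hfix.
have n0 : (0 < #|gT|)%N by rewrite -cardsT cardG_gt0.
pose h' := (h ^ (totient #|gT|).-1)%N.
have hh' : (h * h' = 1 %[mod #|gT|])%N.
  by rewrite /h' -expnS prednK ?totient_gt0 //; apply: Euler_exp_totient.
have co' : coprime h' #|gT| by rewrite coprimeXl.
have Hhh (y : gT) : ((y ^+ h') ^+ h)%g = y by rewrite -expgnA mulnC exp_mod1.
have Hhh2 (y : gT) : ((y ^+ h) ^+ h')%g = y by rewrite -expgnA exp_mod1.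
pose F := @mkCF gT (fun x => ratr (f x)) (fun x y => f_equal ratr (fJ x y)).
have FE x : F x = ratr (f x) by rewrite mkCFE.
have HD : forall x y : gT, ratr (f ((x ^ y) ^+ h')%g) - ratr (f (x ^ y)%g) =
                       ratr (f (x ^+ h')%g) - ratr (f x) :> algC.
  by move=> x y; rewrite -conjXg !fJ.
pose D := @mkCF gT _ HD.
suff D0 : forall y : gT, f (y ^+ h')%g = f y.
  by move=> u; rewrite -(D0 (u ^+ h)%g) Hhh2.
suff DD : D = 0.
  move=> y; have := congr1 (fun phi : 'CF([set: gT]) => phi y) DD.
  rewrite /= mkCFE cfunE => /eqP; rewrite subr_eq0 => /eqP; exact: ratr_inj'.
rewrite (cfun_sum_cfdot D) big1 // => i _.
suff -> : '[D, 'chi_i] = 0 by rewrite scale0r.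
have eg := Hfix _ (@eig_chi gT f i F FE).
have c1 : 'chi_i 1%g != 0 by apply: irr1_neq0.
move: eg; rewrite cdE fmorph_div (char_aut Hnu) expg1n.
move/(divIf c1); rewrite rmorph_sum => E1.
apply: (mulIf (neq0CG [set: gT])); rewrite mul0r cdE.
transitivity (\sum_x F (x ^+ h')%g * 'chi_i (x^-1)%g - \sum_x F x * 'chi_i (x^-1)%g).
  rewrite -sumrB; apply: eq_bigr => x _; rewrite mkCFE !FE mulrBl //.
apply/eqP; rewrite subr_eq0 -E1; apply/eqP.
rewrite [RHS](reindex_inj (inj_exp _ _ co')) /=; apply: eq_bigr => x _.
by rewrite !FE rmorphM fmorph_rat (char_aut Hnu) expVgn Hhh.
Qed.

Lemma gen1 E : in_gen_subfield E 1.
Proof. by move=> S HS _; apply: dc1. Qed.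
Lemma gen0 E : in_gen_subfield E 0.
Proof. by move=> S HS _; apply: dc0. Qed.
Lemma genB E a b : in_gen_subfield E a -> in_gen_subfield E b -> in_gen_subfield E (a - b).
Proof. by move=> Ha Hb S HS HE; apply: dcB HS (Ha S HS HE) (Hb S HS HE). Qed.
Lemma genD E a b : in_gen_subfield E a -> in_gen_subfield E b -> in_gen_subfield E (a + b).
Proof. by move=> Ha Hb S HS HE; apply: dcD HS (Ha S HS HE) (Hb S HS HE). Qed.
Lemma genM E a b : in_gen_subfield E a -> in_gen_subfield E b -> in_gen_subfield E (a * b).
Proof. by move=> Ha Hb S HS HE; apply: dcM HS (Ha S HS HE) (Hb S HS HE). Qed.
Lemma genDiv E a b : in_gen_subfield E a -> in_gen_subfield E b -> in_gen_subfield E (a / b).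
Proof. by move=> Ha Hb S HS HE; apply: dcDiv HS (Ha S HS HE) (Hb S HS HE). Qed.
Lemma genX E a k : in_gen_subfield E a -> in_gen_subfield E (a ^+ k).
Proof. by move=> Ha S HS HE; apply: dcX HS (Ha S HS HE). Qed.
Lemma genE E a : E a -> in_gen_subfield E a.
Proof. by move=> Ea S HS HE; apply: HE. Qed.

Lemma fix_closed (g : algC -> algC) : g 1 = 1 -> (forall a b, g (a - b) = g a - g b) ->
  (forall a b, g (a / b) = g a / g b) -> divring_closed [pred y | g y == y].
Proof.
move=> g1 gB gD; split; first by rewrite inE g1.
  by move=> a b; rewrite !inE gB => /eqP -> /eqP ->.
by move=> a b; rewrite !inE gD => /eqP -> /eqP ->.
Qed.

Lemma Qz_stable (z : algC) k (nu : {rmorphism algC -> algC}) x :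
  nu z = z ^+ k -> in_Qz z x -> in_Qz z (nu x).
Proof.
move=> Hz Hx S HS HzS; have Sz := HzS z erefl.
have HS' : divring_closed [pred y | nu y \in S].
  split; first by rewrite inE rmorph1 dc1.
    by move=> a b; rewrite !inE rmorphB; apply: dcB.
  by move=> a b; rewrite !inE fmorph_div; apply: dcDiv.
have : x \in [pred y | nu y \in S].
  by apply: Hx HS' _ => y ->; rewrite inE Hz dcX.
by rewrite inE.
Qed.
Arguments Qz_stable {z k nu x}.
Arguments eig_fixed {gT f h nu l}.
Arguments eig_in_S {gT f z S l}.

Lemma part1 (gT : finGroupType) (f : gT -> rat) (z : algC) :
  (forall g x : gT, f (g ^ x)%g = f g) -> #|gT|.-primitive_root z ->
  forall x, in_SF f x -> in_Qz z x.
Proof.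
move=> fJ pz x Hx; rewrite /in_Qz /in_gen_subfield => S HS HzS.
apply: (Hx S HS) => y Ey.
exact: eig_in_S fJ pz HS (HzS z erefl) Ey.
Qed.

Lemma hinv_ex n h : (0 < n)%N -> coprime h n ->
  exists h', coprime h' n /\ (h * h' = 1 %[mod n])%N.
Proof.
move=> n0 co; exists (h ^ (totient n).-1)%N; split; first by rewrite coprimeXl.
by rewrite -expnS prednK ?totient_gt0 //; apply: Euler_exp_totient.
Qed.

Lemma forward (gT : finGroupType) (f : gT -> rat) (z : algC) (h : nat) :
  (forall g x : gT, f (g ^ x)%g = f g) -> #|gT|.-primitive_root z ->
  coprime h #|gT| -> (forall g : gT, f (g ^+ h)%g = f g) ->
  exists sigma, in_Gal_Qz_SF f z sigma /\ sigma z = z ^+ h.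
Proof.
move=> fJ pz co fh.
have n0 : (0 < #|gT|)%N by rewrite -cardsT cardG_gt0.
have zn : z ^+ #|gT| = 1 by apply: prim_expr_order.
have [nu Dnu] := Qn_aut_exists co.
have [h' [co' hh']] := hinv_ex _ _ n0 co.
have [nu' Dnu'] := Qn_aut_exists co'.
exists nu; split; last exact: Dnu.
split; last first.
  move=> x Hx; apply/eqP; have : x \in [pred y | nu y == y]; last by rewrite inE.
  apply: Hx; first by apply: fix_closed; [exact: rmorph1 | exact: rmorphB | exact: fmorph_div].
  move=> y Ey; rewrite inE; apply/eqP; exact: eig_fixed fJ co Dnu fh Ey.
split; first by move=> x; apply: (Qz_stable (Dnu _ zn)).
split.
- by move=> x y _ _; rewrite rmorphD.
- by move=> x y _ _; rewrite rmorphM.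
- exact: rmorph1.
- by move=> x y _ _; apply: fmorph_inj.
move=> y Hy; exists (nu' y); first exact: (Qz_stable (Dnu' _ zn)).
apply/eqP; have : y \in [pred w | nu (nu' w) == w]; last by rewrite inE.
apply: Hy.
  apply: fix_closed; first by rewrite !rmorph1.
    by move=> a b; rewrite !rmorphB.
  by move=> a b; rewrite !fmorph_div.
move=> w ->; rewrite inE Dnu' // rmorphXn Dnu // -exprM.
by rewrite -(prim_expr_mod pz) hh' prim_expr_mod // expr1.
Qed.

Arguments conv {gT f h nu}.

Lemma backward (gT : finGroupType) (f : gT -> rat) (z : algC) (h : nat) :
  (forall g x : gT, f (g ^ x)%g = f g) -> #|gT|.-primitive_root z ->
  (exists sigma, in_Gal_Qz_SF f z sigma /\ sigma z = z ^+ h) ->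
  coprime h #|gT| /\ (forall g : gT, f (g ^+ h)%g = f g).
Proof.
move=> fJ pz [sigma [[[stab [sD sM s1 sI sS]] sfix] sz]].
have n0 : (0 < #|gT|)%N by rewrite -cardsT cardG_gt0.
have zn : z ^+ #|gT| = 1 by apply: prim_expr_order.
have Qzz : in_Qz z z by apply: genE.
have sX m : sigma (z ^+ m) = (sigma z) ^+ m.
  elim: m => [|m IH]; first by rewrite !expr0 s1.
  by rewrite !exprS sM ?IH //; apply: genX.
have co : coprime h #|gT|.
  rewrite -(prim_root_exp_coprime h pz).
  have zhn : (z ^+ h) ^+ #|gT| = 1 by rewrite -exprM mulnC exprM zn expr1n.
  have [m dm pm] := prim_order_exists n0 zhn.
  suff mn : m = #|gT| by rewrite -mn.
  have : z ^+ m = 1.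
    apply: sI; [exact: genX | exact: gen1 | ].
    by rewrite sX s1 sz (prim_expr_order dm).
  move/eqP; rewrite -(prim_order_dvd pz) => nm.
  by apply/eqP; rewrite eqn_dvd pm nm.
split => //.
have [nu Dnu] := Qn_aut_exists co.
have s0 : sigma 0 = 0.
  have := sD _ _ (gen0 _) (gen0 _); rewrite addr0 => /(congr1 (fun t => t - sigma 0)).
  by rewrite subrr addrK.
have agree x : in_Qz z x -> sigma x = nu x.
  move=> Hx; have : x \in [pred y | asb (in_Qz z y /\ sigma y = nu y)]; last first.
    by rewrite inE => /asbP [].
  apply: Hx => [|y ->]; last first.
    by rewrite inE; apply/asbP; split=> //; rewrite sz Dnu.
  split.
  - by rewrite inE; apply/asbP; split; [exact: gen1 | rewrite s1 rmorph1].
  - move=> a b; rewrite !inE => /asbP [Qa Ha] /asbP [Qb Hb]; apply/asbP.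
    split; first exact: genB.
    have sB : sigma (a - b) = sigma a - sigma b.
      by apply: (addIr (sigma b)); rewrite -sD ?subrK //; apply: genB.
    by rewrite sB Ha Hb rmorphB.
  - move=> a b; rewrite !inE => /asbP [Qa Ha] /asbP [Qb Hb]; apply/asbP.
    split; first exact: genDiv.
    have [-> | b0] := eqVneq b 0; first by rewrite invr0 mulr0 s0 rmorph0.
    have sb0 : sigma b != 0.
      by apply: contra_neq b0 => sb; apply: sI => //; [exact: gen0 | rewrite s0].
    have sDv : sigma (a / b) = sigma a / sigma b.
      apply: (mulIf sb0); rewrite -sM ?divfK //; exact: genDiv.
    by rewrite sDv Ha Hb fmorph_div.
have Hfix l : eigenvalue (cay_adj f) l -> nu l = l.
  move=> Hl; have SFl : in_SF f l by apply: genE.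
  by rewrite -agree; [exact: sfix | exact: part1 fJ pz _ SFl].
exact: conv fJ co Dnu Hfix.
Qed.

Theorem mainTheorem5 (gT : finGroupType) (f : gT -> rat) (z : algC) :
  (forall g x : gT, f (g ^ x)%g = f g) ->
  (forall g : gT, f (g^-1)%g = f g) ->
  #|gT|.-primitive_root z ->
  (forall x, in_SF f x -> in_Qz z x) /\
  (forall h : 'I_#|gT|,
     (coprime h #|gT| /\ (forall g : gT, f (g ^+ h)%g = f g)) <->
     (exists sigma, in_Gal_Qz_SF f z sigma /\ sigma z = z ^+ h)).
Proof.
move=> fJ _ pz; split; first exact: part1.
move=> h; split; first by case=> co fh; apply: forward.
exact: backward.
Qed.
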